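(* Let $\ell\ge1$ be an integer and let $\tau^\ell$ be the $(2\ell+1)\times(2\ell+1)$ matrix defined in the context. Then: (a) $\tau^\ell$ is invertible (indeed unitary); (b) $|\tau^\ell_{0,0}|<1$; (c) Let $v\in\mathbb{C}^{2\ell+1}$ (coordinates indexed by $-\ell,\dots,\ell$) be supported either on $\{-\ell,\dots,-1\}$ or on $\{1,\dots,\ell\}$, and suppose $\tau^\ell v$ is supported either on $\{n\in\{-\ell,\dots,\ell\}: n+\ell \text{ even}\}$ or on $\{n\in\{-\ell,\dots,\ell\}: n+\ell\text{ odd}\}$. Then $v=0$ (and hence $\tau^\ell v=0$). (All four combinations of these support conditions are covered.)
   Context: For $\ell\in\{\tfrac12,1,\tfrac32,2,\dots\}$ and $m,n\in\{-\ell,-\ell+1,\dots,\ell\}$, define $$\tau^\ell_{m,n}=\sqrt{\frac{(\ell-m)!(\ell+m)!}{(\ell-n)!(\ell+n)!}}\;\frac{i^{2\ell}}{2^\ell}\int_{|z|=1}(z+1)^{\ell-n}(z-1)^{\ell+n}z^{m-\ell}\,\frac{dz}{2\pi i z},$$ i.e. the prefactor times the coefficient of $z^{\ell-m}$ in the polynomial $(z+1)^{\ell-n}(z-1)^{\ell+n}$. The matrix $\tau^\ell=(\tau^\ell_{m,n})$, rows indexed by $m$ and columns by $n$ in increasing order from $-\ell$ to $\ell$, is the matrix of the spin-$\ell$ irreducible representation of $SU(2)$ evaluated at $\frac{1}{\sqrt2}\begin{pmatrix} i & i\\ i & -i\end{pmatrix}$, and is unitary. *)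

(* Defs.v *)
From HB Require Import structures.
From mathcomp Require Import all_boot all_order all_algebra all_field.
Set Implicit Arguments. Unset Strict Implicit. Unset Printing Implicit Defensive.
Import Order.TTheory GRing.Theory Num.Theory.
Local Open Scope ring_scope.

(* Indices: row index i : 'I_(2l+1) encodes m = i - l, column j encodes n = j - l.
   Then l - m = 2l - i, l + m = i, l - n = 2l - j, l + n = j. *)

(* coefficient of z^(l-m) in (z+1)^(l-n) (z-1)^(l+n) *)
Definition tau_coef (l i j : nat) : algC :=
  ((('X + 1) ^+ (2 * l - j)%N * ('X - 1) ^+ j) : {poly algC})`_(2 * l - i)%N.

Definition tau (l : nat) : 'M[algC]_(2 * l + 1) :=
  \matrix_(i < 2 * l + 1, j < 2 * l + 1)
    (sqrtC (((2 * l - i)`! * i`!)%:R / ((2 * l - j)`! * j`!)%:R)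
     * ('i ^+ (2 * l) / 2 ^+ l) * tau_coef l i j).

Definition adjmx n (A : 'M[algC]_n) : 'M[algC]_n := (map_mx Num.conj A)^T.

(* v supported on {-l,...,-1}, i.e. index i with i < l *)
Definition supp_neg l (v : 'cV[algC]_(2 * l + 1)) : Prop :=
  forall i : 'I_(2 * l + 1), (l <= i)%N -> v i 0 = 0.
(* v supported on {1,...,l}, i.e. index i with l < i *)
Definition supp_pos l (v : 'cV[algC]_(2 * l + 1)) : Prop :=
  forall i : 'I_(2 * l + 1), (i <= l)%N -> v i 0 = 0.
(* supported on {n : n + l even}; n + l = index j *)
Definition supp_even l (w : 'cV[algC]_(2 * l + 1)) : Prop :=
  forall j : 'I_(2 * l + 1), odd j -> w j 0 = 0.
Definition supp_odd l (w : 'cV[algC]_(2 * l + 1)) : Prop :=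
  forall j : 'I_(2 * l + 1), ~~ odd j -> w j 0 = 0.

(* the index encoding m = 0, i.e. i = l *)
Lemma mid_lt (l : nat) : (l < 2 * l + 1)%N.
Proof. by rewrite addn1 ltnS mul2n -addnn leq_addr. Qed.
Definition mid (l : nat) : 'I_(2 * l + 1) := Ordinal (mid_lt l).

(* Main.v *)
Require Import Defs.
From HB Require Import structures.
From mathcomp Require Import all_boot all_order all_algebra all_field.
From mathcomp Require Import ring lra zify.
Set Implicit Arguments. Unset Strict Implicit. Unset Printing Implicit Defensive.
Import Order.TTheory GRing.Theory Num.Theory.
Local Open Scope ring_scope.

Definition hom (m : nat) (p a b : {poly algC}) : {poly algC} :=
  \sum_(k < m.+1) (p`_k)%:P * a ^+ k * b ^+ (m - k).

Lemma homXc m (p : {poly algC}) (c : algC) (a b : {poly algC}) : (size p <= m.+1)%N ->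
  hom m.+1 (('X + c%:P) * p) a b = (a + c%:P * b) * hom m p a b.
Proof.
move=> sp; rewrite /hom mulrDl.
under eq_bigr do rewrite coefD polyCD !mulrDl.
rewrite big_split /= [RHS]mulrDl; congr (_ + _).
  rewrite big_ord_recl coefXM /= mul0r mul0r add0r big_distrr /=.
  apply: eq_bigr => i _; rewrite coefXM /= subSS exprS; ring.
rewrite big_ord_recr /= coefCM (nth_default _ sp) mulr0 mul0r mul0r addr0.
rewrite big_distrr /=; apply: eq_bigr => i _; rewrite coefCM polyCM.
rewrite subSn ?exprS; last by rewrite -ltnS.
ring.
Qed.

Lemma XaddE : 'X + 1 = 'X - (-1)%:P :> {poly algC}.
Proof. by rewrite polyCN opprK polyC1. Qed.
Lemma XsubE : 'X - 1 = 'X - 1%:P :> {poly algC}.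
Proof. by rewrite polyC1. Qed.

Lemma size_Pp u v : size (('X + 1)^+u * ('X - 1)^+v : {poly algC}) = (u + v).+1.
Proof.
rewrite XaddE XsubE size_mul ?expf_neq0 ?polyXsubC_eq0 // !size_exp_XsubC.
by rewrite addSn addnS.
Qed.

Lemma hom_pow u v (a b : {poly algC}) :
  hom (u + v) (('X + 1)^+u * ('X - 1)^+v) a b = (a + b)^+u * (a - b)^+v.
Proof.
elim: u => [|u IH].
  rewrite add0n !expr0 !mul1r.
  elim: v => [|v IHv].
    by rewrite /hom big_ord_recl big_ord0 addr0 coefC /= !expr0 !mulr1.
  have E : 'X - 1 = 'X + (-1)%:P :> {poly algC} by rewrite polyCN polyC1.
  rewrite exprS {1}E homXc.
    by rewrite IHv polyCN polyC1 mulN1r exprS.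
  by rewrite XsubE size_exp_XsubC.
rewrite addSn exprS -mulrA -{1}polyC1 homXc.
  by rewrite IH mul1r exprS mulrA.
by rewrite size_Pp.
Qed.

Definition P (l j : nat) : {poly algC} := ('X + 1)^+(2 * l - j) * ('X - 1)^+j.

Lemma revP l j (a b : {poly algC}) : (j <= 2 * l)%N ->
  \sum_(k < (2 * l).+1) ((P l j)`_(2 * l - k))%:P * a ^+ (2 * l - k) * b ^+ k
  = (a + b) ^+ (2 * l - j) * (a - b) ^+ j.
Proof.
move=> hj; rewrite -hom_pow subnK // /hom /P (reindex_inj rev_ord_inj) /=.
apply: eq_bigr => k _; rewrite subSS subKn //; by rewrite -ltnS.
Qed.

Definition A (l i j : nat) : algC := (P l j)`_(2 * l - i).

Lemma tau_coefE l i j : tau_coef l i j = A l i j.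
Proof. by []. Qed.

Lemma A2 l i k : (i <= 2 * l)%N -> (k <= 2 * l)%N ->
  \sum_(j < (2 * l).+1) A l i j * A l j k = 2 ^+ (2 * l) * (i == k)%:R.
Proof.
move=> hi hk.
have := revP ('X + 1) ('X - 1) hk.
have -> : ('X + 1 + ('X - 1) : {poly algC}) = 2 * 'X by ring.
have -> : ('X + 1 - ('X - 1) : {poly algC}) = 2 by ring.
rewrite exprMn mulrAC -exprD subnK // => E.
have := congr1 (fun p : {poly algC} => p`_(2 * l - i)) E => /=.
rewrite coef_sum (_ : 2 = (2 : algC)%:P); last by rewrite polyC_natr.
rewrite -rmorphXn coefCM coefXn.
have -> : (2 * l - i == 2 * l - k)%N = (i == k).
  by apply/eqP/eqP => ?; lia.
move=> <-; apply: eq_bigr => j _; rewrite -mulrA coefCM mulrC.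
by rewrite /A /P.
Qed.

Lemma coef_sumX n (c : nat -> algC) i : (i < n)%N ->
  (\sum_(k < n) (c k)%:P * 'X^k)`_i = c i.
Proof.
move=> hi; under eq_bigr do rewrite mul_polyC.
by rewrite coef_sumMXn /= big_ord1_eq hi.
Qed.

Lemma Acoef l i j : (i <= 2 * l)%N -> (j <= 2 * l)%N ->
  ((1 + 'X)^+(2 * l - j) * (1 - 'X)^+j : {poly algC})`_i = A l i j.
Proof.
move=> hi hj; rewrite -(revP 1 'X hj).
under eq_bigr do rewrite expr1n mulr1.
by rewrite (coef_sumX (fun k => (P l j)`_(2 * l - k))) // ltnS.
Qed.

Lemma A0 l j : (j <= 2 * l)%N -> A l 0 j = 1.
Proof.
move=> hj; have := revP 1 0 hj.
rewrite big_ord_recl big1 => [|k _]; last by rewrite expr0n /= mulr0.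
rewrite expr0 mulr1 subn0 expr1n mulr1 addr0 => E; apply/polyC_inj; rewrite /A subn0 E.
by rewrite subr0 addr0 !expr1n mulr1.
Qed.

Definition FF (l : nat) : {poly {poly algC}} := (1 + 'X + 'Y * (1 - 'X)) ^+ (2 * l).

Lemma FFcoef l i j : (i <= 2 * l)%N -> (j <= 2 * l)%N ->
  (FF l)`_i`_j = 'C(2 * l, j)%:R * A l i j.
Proof.
move=> hi hj.
rewrite /FF exprDn.
have E k : ((1 + 'X) ^+ (2 * l - k) * ('Y * (1 - 'X)) ^+ k : {poly {poly algC}})
   = ('X^k)%:P * (((1 + 'X)^+(2 * l - k) * (1 - 'X)^+k : {poly algC}) ^:P).
  rewrite rmorphM !rmorphXn rmorphD rmorphB /= map_polyX rmorph1 exprMn.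
  ring.
under eq_bigr do rewrite E.
rewrite coef_sum coef_sum.
under eq_bigr do rewrite coefMn coefCM coef_map /= coefMn coefMC coefXn.
rewrite (bigD1 (Ordinal (hj : j < (2 * l).+1)%N)) //= eqxx mul1r.
rewrite big1 ?addr0 => [|k hk]; last first.
  have -> : (j == k :> nat) = false.
    by apply/negbTE; apply: contra hk => /eqP e; apply/eqP/val_inj; rewrite /= e.
  by rewrite mul0r mul0rn.
by rewrite Acoef // mulr_natl.
Qed.

Lemma Asym l i j : (i <= 2 * l)%N -> (j <= 2 * l)%N ->
  'C(2 * l, j)%:R * A l i j = 'C(2 * l, i)%:R * A l j i.
Proof.
move=> hi hj; rewrite -!FFcoef //.
suff S : swapXY (FF l) = FF l by rewrite -{1}S coef_swapXY.
rewrite /FF rmorphXn rmorphD rmorphD rmorphM rmorphB rmorph1 /= swapXY_X swapXY_Y.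
by congr (_ ^+ _); ring.
Qed.

Lemma sum_addn1 n (F : nat -> algC) : \sum_(i < n + 1) F i = \sum_(i < n.+1) F i.
Proof. by rewrite addn1. Qed.

Lemma A_conj l i j : (A l i j)^* = A l i j.
Proof.
rewrite /A -coef_map; congr (_`_ _).
by rewrite /P rmorphM !rmorphXn rmorphD rmorphB /= map_polyX rmorph1.
Qed.

Lemma A_real l i j : A l i j \is Num.real.
Proof. by rewrite CrealE A_conj. Qed.

Definition rr l (i : nat) : algC := ((2 * l - i)`! * i`!)%:R.
Definition dd l i := sqrtC (rr l i).
Definition cc l : algC := 'i ^+ (2 * l) / 2 ^+ l.

Lemma rr_gt0 l i : 0 < rr l i.
Proof. by rewrite ltr0n muln_gt0 !fact_gt0. Qed.
Lemma rr_neq0 l i : rr l i != 0.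
Proof. by rewrite gt_eqF ?rr_gt0. Qed.
Lemma dd_gt0 l i : 0 < dd l i.
Proof. by rewrite sqrtC_gt0 rr_gt0. Qed.
Lemma dd_neq0 l i : dd l i != 0.
Proof. by rewrite gt_eqF ?dd_gt0. Qed.
Lemma dd_sq l i : dd l i ^+ 2 = rr l i.
Proof. exact: sqrtCK. Qed.

Lemma sqrt_div l i j : sqrtC (rr l i / rr l j) = dd l i / dd l j.
Proof.
apply: (mulIf (dd_neq0 l j)); rewrite divfK ?dd_neq0 // /dd -sqrtCM.
- by rewrite divfK ?rr_neq0.
- by rewrite nnegrE divr_ge0 // ltW ?rr_gt0.
- by rewrite nnegrE ltW ?rr_gt0.
Qed.

Lemma tauE l (i j : 'I_(2 * l + 1)) : tau l i j = dd l i / dd l j * cc l * A l i j.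
Proof. by rewrite mxE sqrt_div. Qed.

Lemma cc_conj l : (cc l)^* = cc l.
Proof.
rewrite /cc fmorph_div rmorphXn /= conjCi rmorphXn rmorph_nat /=.
by rewrite !exprM sqrrN.
Qed.

Lemma cc_sq l : cc l * cc l * 2 ^+ (2 * l) = 1.
Proof.
have hi : 'i ^+ (2 * l) = (-1) ^+ l :> algC by rewrite exprM sqrCi.
have h2 : (2:algC) ^+ (2 * l) = 2 ^+ l * 2 ^+ l by rewrite mul2n -addnn exprD.
have h0 : (2:algC) ^+ l != 0 by rewrite expf_neq0 // pnatr_eq0.
rewrite /cc hi h2.
have hs : ((-1) ^+ l * (-1) ^+ l : algC) = 1 by rewrite -expr2 sqrr_sign.
by rewrite mulf_div hs mul1r mulVf // mulf_neq0.
Qed.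

Lemma dd_conj l i : (dd l i)^* = dd l i.
Proof. by rewrite geC0_conj // ltW ?dd_gt0. Qed.

Lemma tau_conj l (i j : 'I_(2 * l + 1)) : (tau l i j)^* = tau l i j.
Proof. by rewrite tauE rmorphM /= A_conj rmorphM /= cc_conj rmorphM /= fmorphV /= !dd_conj. Qed.

Lemma rr_bin l j : (j <= 2 * l)%N -> 'C(2 * l, j)%:R * rr l j = (2 * l)`!%:R.
Proof. by move=> hj; rewrite /rr -natrM (mulnC (_`!)) bin_fact. Qed.

Lemma bin_neq0 l j : (j <= 2 * l)%N -> ('C(2 * l, j)%:R : algC) != 0.
Proof. by move=> hj; rewrite pnatr_eq0 -lt0n bin_gt0. Qed.

Lemma orth l i k : (i <= 2 * l)%N -> (k <= 2 * l)%N ->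
  \sum_(j < (2 * l).+1) A l i j * A l k j / rr l j = 2 ^+ (2 * l) * (i == k)%:R / rr l i.
Proof.
move=> hi hk.
have E (j : 'I_(2 * l).+1) : A l i j * A l k j / rr l j =
    'C(2 * l, k)%:R / (2 * l)`!%:R * (A l i j * A l j k).
  have hj : (j <= 2 * l)%N by rewrite -ltnS.
  have := Asym hk hj; have := rr_bin hj; have := bin_neq0 hj; have := rr_neq0 l j.
  move=> h1 h2 h3 h4; rewrite -h3.
  have hk' := bin_neq0 hk.
  have -> : A l j k = 'C(2 * l, j)%:R * A l k j / 'C(2 * l, k)%:R.
    by rewrite h4 mulrC mulrA mulVf // mul1r.
  by field; rewrite hk' h2 !pnatr_eq0 -!lt0n !fact_gt0.
rewrite (eq_bigr _ (fun j _ => E j)) -mulr_sumr A2 //.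
case: eqP => [->|_]; last by rewrite !mulr0 mul0r.
have := rr_bin hk; have := bin_neq0 hk; have := rr_neq0 l k.
move=> h1 h2 h3; rewrite -h3 mulr1.
by field; rewrite h2 !pnatr_eq0 -!lt0n !fact_gt0.
Qed.

Lemma ord_le (l : nat) (i : 'I_(2 * l + 1)) : (i <= 2 * l)%N.
Proof. by have := ltn_ord i; move: (nat_of_ord i) => n; rewrite addn1 ltnS. Qed.

Lemma tau_unitary l : tau l *m adjmx (tau l) = 1%:M.
Proof.
apply/matrixP => i k; rewrite [LHS]mxE [RHS]mxE.
under eq_bigr => j _ do rewrite /adjmx [X in _ * X]mxE [X in _ * X]mxE tau_conj.
have E (j : 'I_(2 * l + 1)) : tau l i j * tau l k j =
   cc l * cc l * dd l i * dd l k * (A l i j * A l k j / rr l j).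
  rewrite !tauE -(dd_sq l j); have := dd_neq0 l j => h.
  by field.
rewrite (eq_bigr _ (fun j _ => E j)) -mulr_sumr.
rewrite (sum_addn1 _ (fun j => A l i j * A l k j / rr l j)) orth ?ord_le //.
case: (eqVneq i k) => [->|ne]; last first.
  have -> : (i == k :> nat) = false by apply/negbTE.
  by rewrite (_ : false%:R = 0 :> algC) // mulr0 mul0r mulr0.
rewrite eqxx /= mulr1 -(dd_sq l k); have := dd_neq0 l k => h.
rewrite -[RHS](cc_sq l); by field.
Qed.

Lemma A_l0 l i : (i <= 2 * l)%N -> A l i 0 = 'C(2 * l, i)%:R.
Proof.
move=> hi; have := Asym hi (leq0n _).
by rewrite bin0 mul1r A0 // mulr1.
Qed.

Lemma sqA_ge0 l i j : 0 <= A l i j * A l i j.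
Proof. by rewrite -expr2 -real_normK ?A_real // exprn_ge0. Qed.

Lemma Amid_lt l : (1 <= l)%N -> `|A l l l| < 2 ^+ l.
Proof.
move=> hl.
have hll : (l <= 2 * l)%N by rewrite mul2n -addnn leq_addr.
have := orth hll hll; rewrite eqxx mulr1.
have hl1 : (l < (2 * l).+1)%N by rewrite ltnS.
rewrite (bigD1 (Ordinal hl1)) //= (bigD1 ord0) /=; last first.
  by rewrite -val_eqE /= eq_sym -lt0n.
rewrite A_l0 // => E.
have key : A l l l * A l l l / rr l l < 2 ^+ (2 * l) / rr l l.
  rewrite -E ltrDl ltr_pwDl //.
    by rewrite divr_gt0 ?rr_gt0 // mulr_gt0 // ltr0n bin_gt0.
  rewrite sumr_ge0 // => j _.
  by rewrite divr_ge0 ?sqA_ge0 // ltW ?rr_gt0.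
move: key; rewrite ltr_pM2r ?invr_gt0 ?rr_gt0 // -expr2 -real_normK ?A_real //.
rewrite mulnC exprM.
by rewrite ltr_pXn2r // nnegrE ?exprn_ge0.
Qed.

Lemma partb l : (1 <= l)%N -> `|tau l (mid l) (mid l)| < 1.
Proof.
move=> hl; rewrite tauE /= divff ?dd_neq0 // mul1r /cc normrM normf_div.
rewrite normrX normCi expr1n normrX normr_nat.
by rewrite mul1r mulrC ltr_pdivrMr ?mul1r ?Amid_lt // exprn_gt0.
Qed.

Lemma coefNXn i n : ((- 'X) ^+ i : {poly algC})`_n = (-1) ^+ i * (n == i)%:R.
Proof.
by rewrite -scaleN1r exprZn coefZ coefXn.
Qed.

Lemma comp_negX (f : {poly algC}) (s : bool) :
  (forall k, odd k = ~~ s -> f`_k = 0) -> f \Po (- 'X) = (-1) ^+ s *: f.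
Proof.
move=> hf; apply/polyP => n.
rewrite coef_comp_poly coefZ.
under eq_bigr do rewrite coefNXn.
have -> : \sum_(i < size f) f`_i * ((-1) ^+ i * (n == i)%:R) =
          \sum_(i < size f | (i == n :> nat)) f`_i * (-1) ^+ i.
  rewrite [RHS]big_mkcond /=; apply: eq_bigr => i _; rewrite eq_sym.
  by case: eqP => _; rewrite ?mulr1 ?mulr0.
rewrite (big_ord1_eq _ (fun i => f`_i * (-1) ^+ i)); case: ltnP => hn; last by rewrite nth_default // mulr0.
case hs: (odd n == ~~ s).
  by rewrite hf ?mul0r ?mulr0 //; apply/eqP.
have e : odd n = s by move: hs; case: (odd n); case: (s).
by rewrite -(signr_odd _ n) e mulrC.
Qed.

Lemma dvd_flip (f : {poly algC}) (s : bool) m c :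
  f \Po (- 'X) = (-1) ^+ s *: f -> ('X + c%:P) ^+ m %| f -> ('X - c%:P) ^+ m %| f.
Proof.
move=> hf /dvdpP [q hq].
have hs : ((-1) ^+ s : algC) != 0 by rewrite signr_eq0.
rewrite -(dvdpZr _ _ hs) -hf hq comp_polyM rmorphXn /=.
rewrite comp_polyD comp_polyX comp_polyC.
have -> : (- 'X + c%:P) = - ('X - c%:P) :> {poly algC} by rewrite opprB addrC.
by rewrite exprNn mulrCA dvdp_mull // dvdp_mull.
Qed.

Definition ww l (v : 'cV[algC]_(2 * l + 1)) (j : 'I_(2 * l + 1)) := v j 0 / dd l j.
Definition ff l (v : 'cV[algC]_(2 * l + 1)) : {poly algC} :=
  \sum_(j < 2 * l + 1) ww v j *: P l j.

Lemma ff_coef l v (i : nat) :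
  (ff v)`_(2 * l - i) = \sum_(j < 2 * l + 1) A l i j * ww v j.
Proof. by rewrite /ff coef_sum; apply: eq_bigr => j _; rewrite coefZ mulrC. Qed.

Lemma cc_neq0 l : cc l != 0.
Proof. by rewrite /cc mulf_neq0 ?invr_eq0 ?expf_neq0 ?neq0Ci // pnatr_eq0. Qed.

Lemma Tv l (v : 'cV[algC]_(2 * l + 1)) (i : 'I_(2 * l + 1)) :
  (tau l *m v) i 0 = dd l i * cc l * (ff v)`_(2 * l - i).
Proof.
rewrite mxE ff_coef big_distrr; apply: eq_bigr => j _.
rewrite tauE /ww /=; have := dd_neq0 l j => h; by field.
Qed.

Lemma size_ff l (v : 'cV[algC]_(2 * l + 1)) : (size (ff v) <= (2 * l).+1)%N.
Proof.
rewrite /ff (leq_trans (size_sum _ _ _)) //; apply/bigmax_leqP => j _.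
rewrite (leq_trans (size_scale_leq _ _)) // /P size_Pp subnK //.
exact: ord_le.
Qed.

Lemma ff_parity l (v : 'cV[algC]_(2 * l + 1)) (s : bool) :
  (forall i : 'I_(2 * l + 1), odd i = ~~ s -> (tau l *m v) i 0 = 0) ->
  forall k, odd k = ~~ s -> (ff v)`_k = 0.
Proof.
move=> hT k hk; case: (leqP k (2 * l)) => hkl; last first.
  by rewrite nth_default // (leq_trans (size_ff v)).
have hi : (2 * l - k < 2 * l + 1)%N by rewrite addn1 ltnS leq_subr.
have ho : odd (Ordinal hi) = ~~ s.
  by rewrite /= oddB // oddM /= hk.
have H := hT (Ordinal hi) ho; rewrite Tv /= subKn // in H.
apply: (mulfI (mulf_neq0 (dd_neq0 l (2 * l - k)) (cc_neq0 l))).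
by rewrite mulr0 H.
Qed.

Lemma dvdp_sumP (d : {poly algC}) n (F : 'I_n -> {poly algC}) :
  (forall j, d %| F j) -> d %| \sum_(j < n) F j.
Proof.
move=> h; apply: (big_ind (fun p => d %| p)); [exact: dvdp0 | exact: dvdp_add | by []].
Qed.

Lemma ff_neg l (v : 'cV[algC]_(2 * l + 1)) : supp_neg v -> ('X + 1) ^+ l.+1 %| ff v.
Proof.
move=> hv; apply: dvdp_sumP => j.
case: (leqP l j) => hj.
  by rewrite /ww hv // mul0r scale0r dvdp0.
rewrite -mul_polyC dvdp_mull // /P dvdp_mulr // dvdp_exp2l //.
have := ord_le j; lia.
Qed.

Lemma ff_pos l (v : 'cV[algC]_(2 * l + 1)) : supp_pos v -> ('X - 1) ^+ l.+1 %| ff v.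
Proof.
move=> hv; apply: dvdp_sumP => j.
case: (leqP j l) => hj.
  by rewrite /ww hv // mul0r scale0r dvdp0.
by rewrite -mul_polyC dvdp_mull // /P dvdp_mull // dvdp_exp2l.
Qed.

Lemma zero_of_dvd l (f : {poly algC}) :
  ('X + 1) ^+ l.+1 %| f -> ('X - 1) ^+ l.+1 %| f -> (size f <= (2 * l).+1)%N -> f = 0.
Proof.
move=> h1 h2 hs; apply/eqP; apply: contraT => nz.
have cop : coprimep (('X + 1) ^+ l.+1) (('X - 1) ^+ l.+1 : {poly algC}).
  rewrite coprimep_expl // coprimep_expr // XaddE XsubE coprimep_XsubC2 //.
  by rewrite opprK (_ : 1 + 1 = 2%:R) // pnatr_eq0.
have hd : ('X + 1) ^+ l.+1 * ('X - 1) ^+ l.+1 %| f by rewrite Gauss_dvdp // h1 h2.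
have := dvdp_leq nz hd; rewrite size_Pp => h.
have := leq_trans h hs; lia.
Qed.

Lemma A2w l (w : 'I_(2 * l + 1) -> algC) (k : 'I_(2 * l + 1)) :
  \sum_(i < 2 * l + 1) A l k i * (\sum_(j < 2 * l + 1) A l i j * w j) = 2 ^+ (2 * l) * w k.
Proof.
under eq_bigr do rewrite big_distrr.
rewrite exchange_big /=.
have E (j : 'I_(2 * l + 1)) : \sum_(i < 2 * l + 1) A l k i * (A l i j * w j)
    = 2 ^+ (2 * l) * (k == j :> nat)%:R * w j.
  under eq_bigr do rewrite mulrA.
  rewrite -mulr_suml (sum_addn1 _ (fun i => A l k i * A l i j)) A2 ?ord_le //.
rewrite (eq_bigr _ (fun j _ => E j)) (bigD1 k) //= eqxx mulr1 big1 ?addr0 // => j hj.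
have -> : (k == j :> nat) = false.
  by apply/negbTE; apply: contra hj => /eqP e; apply/eqP/val_inj.
by rewrite mulr0 mul0r.
Qed.

Lemma partc l (v : 'cV[algC]_(2 * l + 1)) :
  (supp_neg v \/ supp_pos v) ->
  (supp_even (tau l *m v) \/ supp_odd (tau l *m v)) -> v = 0.
Proof.
move=> hsupp hpar.
have [s hs] : exists s : bool,
    forall i : 'I_(2 * l + 1), odd i = ~~ s -> (tau l *m v) i 0 = 0.
  case: hpar => h; [exists false | exists true] => i hi; apply: h; by rewrite hi.
have hc := comp_negX (ff_parity hs).
have [d1 d2] : ('X + 1) ^+ l.+1 %| ff v /\ ('X - 1) ^+ l.+1 %| ff v.
  case: hsupp => h.
  - have d := ff_neg h; split => //.
    rewrite XsubE; apply: (dvd_flip hc); by rewrite polyC1.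
  - have d := ff_pos h; split => //.
    rewrite XaddE; apply: (dvd_flip hc); by rewrite polyCN polyC1.
have f0 := zero_of_dvd d1 d2 (size_ff v).
have hz (i : 'I_(2 * l + 1)) : \sum_(j < 2 * l + 1) A l i j * ww v j = 0.
  by rewrite -ff_coef f0 coef0.
apply/matrixP => k j; rewrite (ord1 j) [RHS]mxE.
have := A2w (ww v) k; under eq_bigr do rewrite hz mulr0.
rewrite big1 // => /esym /eqP; rewrite mulf_eq0 expf_eq0 pnatr_eq0 andbF /=.
rewrite /ww mulf_eq0 invr_eq0 (negbTE (dd_neq0 _ _)) orbF => /eqP //.
Qed.

Theorem mainTheorem9 (l : nat) (hl : (1 <= l)%N) :
  [/\ tau l \in unitmx /\ tau l *m adjmx (tau l) = 1%:M,
      `| tau l (mid l) (mid l) | < 1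
    & forall v : 'cV[algC]_(2 * l + 1),
        (supp_neg v \/ supp_pos v) ->
        (supp_even (tau l *m v) \/ supp_odd (tau l *m v)) ->
        v = 0].
Proof.
split; [split|exact: partb|exact: partc].
  exact: (mulmx1_unit (tau_unitary l)).1.
exact: tau_unitary.
Qed.
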